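(* Consider the following $n$-round process. In each round $i$, an adversary chooses $p_i\in[0,1]$, possibly depending on the outcomes of the first $i-1$ rounds, and then a coin with heads probability $p_i$ is tossed. Let $Z_i$ be the indicator of the event that no coin comes up heads in the first $i$ rounds (rounds $1,\dots,i$), and let $Y=\sum_{i=1}^n p_iZ_i$. Then for every real $q$ and every adversary strategy, $\Pr[Y>q]\le\exp(-q)$. *)

(* Defs.v *)
From HB Require Import structures.
From mathcomp Require Import all_boot all_order all_algebra.
From mathcomp Require Import all_classical all_reals all_analysis.
Set Implicit Arguments. Unset Strict Implicit. Unset Printing Implicit Defensive.
Import Order.TTheory GRing.Theory Num.Theory.
Local Open Scope ring_scope.

(* An adversary strategy maps the history (outcomes of previous rounds,
   true = heads) to the heads probability of the next coin. *)
Definition strategy (R : realType) := seq bool -> R.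

Definition valid_strategy (R : realType) (s : strategy R) : Prop :=
  forall h : seq bool, 0 <= s h <= 1.

Definition round_prob (R : realType) (n : nat) (s : strategy R)
  (w : n.-tuple bool) (i : 'I_n) : R := s (take i w).

Definition outcome_prob (R : realType) (n : nat) (s : strategy R)
  (w : n.-tuple bool) : R :=
  \prod_(i < n) (if tnth w i then round_prob s w i else 1 - round_prob s w i).

(* Z_i: no head among the first i+1 rounds (rounds 0..i, 0-indexed) *)
Definition Zind (n : nat) (w : n.-tuple bool) (i : 'I_n) : bool :=
  all (fun b => ~~ b) (take i.+1 w).

Definition Yval (R : realType) (n : nat) (s : strategy R) (w : n.-tuple bool) : R :=
  \sum_(i < n) round_prob s w i * (Zind w i)%:R.

Definition prob_Y_gt (R : realType) (n : nat) (s : strategy R) (q : R) : R :=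
  \sum_(w : n.-tuple bool | q < Yval s w) outcome_prob s w.

(* Main.v *)
Require Import Defs.
From HB Require Import structures.
From mathcomp Require Import all_boot all_order all_algebra.
From mathcomp Require Import all_classical all_reals all_analysis.
Import Order.TTheory GRing.Theory Num.Theory.
Local Open Scope ring_scope.
Set Implicit Arguments. Unset Strict Implicit.

Definition shiftS (R : realType) (s : strategy R) (b : bool) : strategy R :=
  fun h => s (b :: h).

Lemma valid_shift (R : realType) (s : strategy R) b :
  valid_strategy s -> valid_strategy (shiftS s b).
Proof. by move=> hs h; apply: hs. Qed.

Lemma Yval_cons (R : realType) n (s : strategy R) b (w : n.-tuple bool) :
  Yval s [tuple of b :: w] =
  if b then 0 else s [::] + Yval (shiftS s b) w.
Proof.
rewrite /Yval big_ord_recl /round_prob /Zind /=.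
case: b => /=.
  rewrite mulr0 add0r big1 // => i _ /=; by rewrite mulr0.
rewrite take0 /= mulr1; congr (_ + _).
Qed.

Lemma oprob_cons (R : realType) n (s : strategy R) b (w : n.-tuple bool) :
  outcome_prob s [tuple of b :: w] =
  (if b then s [::] else 1 - s [::]) * outcome_prob (shiftS s b) w.
Proof.
rewrite /outcome_prob big_ord_recl tnth0 /round_prob /=; congr (_ * _).
by apply: eq_bigr => i _; rewrite tnthS /=.
Qed.

Lemma sum_tuple (R : realType) n (F : n.+1.-tuple bool -> R) :
  \sum_(w : n.+1.-tuple bool) F w =
  \sum_(b : bool) \sum_(w : n.-tuple bool) F [tuple of b :: w].
Proof.
rewrite pair_big /=.
rewrite (reindex (fun p : bool * n.-tuple bool => [tuple of p.1 :: p.2])) //=.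
exists (fun t : n.+1.-tuple bool => (thead t, [tuple of behead t])).
  by move=> [b w] _ /=; congr pair; apply: val_inj.
by move=> t _; rewrite [in RHS](tuple_eta t).
Qed.

Lemma oprob_ge0 (R : realType) n (s : strategy R) (w : n.-tuple bool) :
  valid_strategy s -> 0 <= outcome_prob s w.
Proof.
move=> hs; rewrite /outcome_prob; apply: prodr_ge0 => i _.
have /andP[h0 h1] := hs (take i w).
by case: ifP => _ //; rewrite /round_prob subr_ge0.
Qed.

Lemma oprob_sum (R : realType) n (s : strategy R) :
  valid_strategy s -> \sum_(w : n.-tuple bool) outcome_prob s w = 1.
Proof.
elim: n s => [|n IH] s hs.
  rewrite (big_pred1 [tuple]) /outcome_prob ?big_ord0 //.
  move=> w /=; apply/esym/eqP/val_inj; by case: w => [[]].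
rewrite sum_tuple big_bool /=.
under eq_bigr do rewrite oprob_cons.
under [X in _ + X]eq_bigr do rewrite oprob_cons.
rewrite -!mulr_sumr !IH ?valid_shift //.
by rewrite !mulr1 addrC subrK.
all: exact: valid_shift.
Qed.

Lemma main_gen (R : realType) (n : nat) (s : strategy R)
  (hs : valid_strategy s) (q : R) :
  prob_Y_gt n s q <= expR (- q).
Proof.
have [qlt0|qge0] := ltP q 0.
  apply: (@le_trans _ _ 1).
    rewrite -(oprob_sum n hs) /prob_Y_gt [X in _ <= X](bigID (fun w => q < Yval s w)) /=.
    rewrite lerDl; apply: sumr_ge0 => w _; exact: oprob_ge0.
  apply: le_trans (expR_ge1Dx _); rewrite lerDl oppr_ge0; exact: ltW.
elim: n s hs q qge0 => [|n IH] s hs q qge0.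
  rewrite /prob_Y_gt big1; first exact: expR_ge0.
  move=> w; rewrite /Yval big_ord0 => h; by move: (le_lt_trans qge0 h); rewrite ltxx.
rewrite /prob_Y_gt big_mkcond sum_tuple big_bool /=.
rewrite big1; last first.
  by move=> w _; rewrite Yval_cons ltNge qge0.
rewrite add0r.
under eq_bigr do rewrite Yval_cons oprob_cons.
have /andP[s0 s1] := hs [::].
rewrite /=.
have -> : \sum_(i : n.-tuple bool)
    (if q < s [::] + Yval (shiftS s false) i
     then (1 - s [::]) * outcome_prob (shiftS s false) i else 0)
  = (1 - s [::]) * prob_Y_gt n (shiftS s false) (q - s [::]).
  rewrite /prob_Y_gt mulr_sumr [RHS]big_mkcond /=; apply: eq_bigr => w _.
  by rewrite ltrBlDl; case: ifP => _; rewrite ?mulr0.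
have Hs' := valid_shift false hs.
have Hp : prob_Y_gt n (shiftS s false) (q - s [::]) <= expR (- (q - s [::])).
  have [lt0|ge0] := ltP (q - s [::]) 0.
    apply: (@le_trans _ _ 1).
      rewrite -(oprob_sum n Hs') /prob_Y_gt [X in _ <= X](bigID (fun w => q - s [::] < Yval (shiftS s false) w)) /=.
      rewrite lerDl; apply: sumr_ge0 => w _; exact: oprob_ge0.
    apply: le_trans (expR_ge1Dx _); rewrite lerDl oppr_ge0; exact: ltW.
  exact: IH.
apply: le_trans (ler_wpM2l _ Hp) _; first by rewrite subr_ge0.
rewrite opprB addrC expRD mulrA.
apply: (@le_trans _ _ (1 * expR (- q))); last by rewrite mul1r.
apply: ler_wpM2r; first exact: expR_ge0.
apply: (@le_trans _ _ (expR (- s [::]) * expR (s [::]))).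
  apply: ler_wpM2r; first exact: expR_ge0.
  by rewrite addrC; apply: expR_ge1Dx.
by rewrite -expRD addNr expR0.
Qed.

Unset Implicit Arguments.
Theorem mainTheorem14 (R : realType) (n : nat) (s : strategy R)
  (hs : valid_strategy s) (q : R) :
  prob_Y_gt n s q <= expR (- q).
Proof. exact: main_gen. Qed.
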